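(* Let $n\geq 2$ and let $G_n$ be the graph whose vertices are the permutations of $[n]$, with $\sigma$ and $\tau$ adjacent iff there is no $k\in[n-1]$ with $\sigma^{-1}([k])=\tau^{-1}([k])$. Then $\chi(G_n)=n$ and the independence number of $G_n$ is $(n-1)!$. Moreover, if $\rho$ is the cyclic permutation $\rho(i)\equiv i+1 \pmod n$ and $H=\langle\rho\rangle$, then each right coset $H\sigma$ is a clique of size $n$ in $G_n$, so the vertex set of $G_n$ is partitioned into $(n-1)!$ cliques of size $n$.
   Context: $G_n$ is the Kneser graph of the permutohedron $\mathrm{Perm}_{n-1}$ (the convex hull of the permutations of $[n]$ as points of $\mathbb{R}^n$): its vertices are permutations, and two vertices are adjacent iff no facet of the permutohedron contains both; the facets correspond to nonempty proper subsets $S\subsetneq[n]$, the facet for $S$ containing exactly the permutations $\sigma$ with $\sigma(S)=[|S|]$. The claim is stated directly in terms of the combinatorial adjacency rule given. *)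

(* Defs.v *)
From mathcomp Require Import all_boot all_fingroup.
Set Implicit Arguments. Unset Strict Implicit. Unset Printing Implicit Defensive.

Section GraphNotions.
Variables (T : finType) (e : rel T).

Definition colorable (k : nat) : bool :=
  [exists c : {ffun T -> 'I_k}, forall x, forall y, e x y ==> (c x != c y)].

(* Chromatic number: the least k <= #|T| admitting a proper k-colouring
   (for irreflexive e, #|T| colours always suffice). *)
Definition chromatic_number : nat :=
  \big[minn/#|T|]_(k < #|T|.+1 | colorable k) k.

Definition independent (A : {set T}) : bool :=
  [forall x in A, forall y in A, ~~ e x y].

Definition independence_number : nat :=
  \max_(A : {set T} | independent A) #|A|.

Definition clique (A : {set T}) : bool :=
  [forall x in A, forall y in A, (x != y) ==> e x y].
End GraphNotions.

(* The graph G_n on permutations of [n] = 'I_n (0-indexed: [k] = {i | i < k}).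
   sigma^{-1}([k]) is the set of i with sigma i < k. *)
Definition preim_init n (s : 'S_n) (k : nat) : {set 'I_n} := [set i | s i < k].

Definition Gadj n : rel 'S_n := fun s t =>
  [forall k : 'I_n, (0 < k) ==> (preim_init s k != preim_init t k)].

Definition rho n : 'S_n := perm (@ordS_inj n).

(* The right coset H sigma = { h o sigma | h in H }, where (h o sigma)(i) =
   h (sigma i). In mathcomp, (sigma * h)%g i = h (sigma i), so h o sigma is
   written (sigma * h)%g. *)
Definition rcosetH n (s : 'S_n) : {set 'S_n} :=
  [set (s * h)%g | h in <[rho n]>%g].

Definition rcosetsH n : {set {set 'S_n}} := [set rcosetH s | s : 'S_n].

(* Main.v *)
Require Import Defs.
From mathcomp Require Import all_boot all_fingroup.
Set Implicit Arguments. Unset Strict Implicit.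

Lemma keyarith n k a b : 0 < k -> k < n -> a < n -> b < n ->
  (forall x, x < n -> ((x + a) %% n < k) = ((x + b) %% n < k)) -> a = b.
Proof.
move=> k0 kn an bn H.
have n0 : 0 < n by apply: leq_ltn_trans kn.
have Eb : ((n - b) %% n + b) %% n = 0 by rewrite modnDml subnK ?modnn // ltnW.
have H0 := H _ (ltn_pmod (n - b) n0). rewrite Eb k0 in H0.
have H1 := H _ (ltn_pmod (n - b + n.-1) n0).
have Eb1 : ((n - b + n.-1) %% n + b) %% n = n.-1.
  by rewrite modnDml addnAC subnK ?(ltnW bn) // modnDl modn_small // ltn_predL.
have F : (n.-1 < k) = false by rewrite ltnNge -ltnS prednK // kn.
rewrite Eb1 F in H1.
set y := ((n - b) %% n + a) %% n in H0.
have Ey : ((n - b + n.-1) %% n + a) %% n = (y + n.-1) %% n.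
  by rewrite /y modnDml addnAC modnDml -!addnA [RHS]modnDml.
rewrite Ey in H1.
case: (posnP y) => [y0|ypos].
  move: y0; rewrite /y modnDml => /eqP.
  rewrite -[0]Eb modnDml -/(_ == _ %[mod n]) eqn_modDl !modn_small //.
  by move/eqP.
move: H1; rewrite -(prednK ypos) addSn -addnS prednK // modnDr modn_small.
  by rewrite (leq_ltn_trans (leq_pred y)) ?H0.
by rewrite (leq_ltn_trans (leq_pred y)) // /y ltn_pmod.
Qed.

Lemma bigmin_le (T : eqType) (r : seq T) (P : pred T) (F : T -> nat) x i0 :
  i0 \in r -> P i0 -> \big[minn/x]_(i <- r | P i) F i <= F i0.
Proof.
elim: r => //= j r IH; rewrite in_cons big_cons => /orP [/eqP-> Pi|ir Pi].
  by rewrite Pi geq_minl.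
case: (P j); last exact: IH.
by rewrite geq_min IH ?orbT.
Qed.

Section S.
Variable n : nat.
Hypothesis hn : 1 < n.

Lemma n0 : 0 < n. Proof. exact: ltnW hn. Qed.

Lemma rhoXE a (i : 'I_n) : ((rho n ^+ a)%g i : nat) = (i + a) %% n.
Proof.
elim: a => [|a IH]; first by rewrite expg0 perm1 addn0 modn_small.
rewrite expgSr permM; set x := (rho n ^+ a)%g i.
by rewrite {1}/rho permE /= /x IH -addn1 modnDml addn1 addnS.
Qed.

Definition ex a : 'S_n := (rho n ^+ a)%g.

Lemma rhoX_mod a : ex a = ex (a %% n).
Proof. apply/permP => i; apply: val_inj; by rewrite /= /ex !rhoXE modnDmr. Qed.

Lemma mem_rcosetH (s t : 'S_n) :
  reflect (exists a : 'I_n, t = (s * ex a)%g) (t \in rcosetH s).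
Proof.
apply: (iffP imsetP).
  case=> h /cycleP [i ->] ->.
  exists (Ordinal (ltn_pmod i n0)). by rewrite -/(ex i) rhoX_mod.
case=> a ->; exists (ex a) => //. exact: mem_cycle.
Qed.

Definition z0 : 'I_n := Ordinal n0.

Lemma ex_inj (a b : 'I_n) : ex a = ex b -> a = b.
Proof.
move=> /(congr1 (fun p : 'S_n => (p z0 : nat))).
rewrite /ex !rhoXE /= !add0n !modn_small //. exact: val_inj.
Qed.

Lemma rcosetH_E (s : 'S_n) : rcosetH s = [set (s * ex a)%g | a : 'I_n].
Proof.
apply/setP => t; apply/mem_rcosetH/imsetP.
  by case=> a ->; exists a.
by case=> a _ ->; exists a.
Qed.

Lemma card_rcosetH (s : 'S_n) : #|rcosetH s| = n.
Proof.
rewrite rcosetH_E card_imset ?card_ord //.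
by move=> a b /mulgI /ex_inj.
Qed.

Lemma exD a b : (ex a * ex b)%g = ex (a + b).
Proof. by rewrite /ex expgD. Qed.

Lemma rcosetH_self (s : 'S_n) : s \in rcosetH s.
Proof.
apply/mem_rcosetH; exists z0; apply/permP => i; apply: val_inj => /=.
by rewrite permM /ex rhoXE /= addn0 modn_small.
Qed.

Lemma rcosetH_eq (s t : 'S_n) : t \in rcosetH s -> rcosetH t = rcosetH s.
Proof.
case/mem_rcosetH=> a ->.
have H1 : forall x y b, y = (x * ex b)%g -> {subset rcosetH y <= rcosetH x}.
  move=> x y b -> u /mem_rcosetH [c ->]; apply/mem_rcosetH.
  exists (Ordinal (ltn_pmod (b + c) n0)). by rewrite -mulgA exD -rhoX_mod.
apply/setP => u; apply/idP/idP; first exact: H1.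
apply: (H1 _ _ (n - a)).
rewrite -mulgA exD subnKC ?(ltnW (ltn_ord a)) //.
rewrite rhoX_mod modnn.
by rewrite /ex expg0 mulg1.
Qed.


Lemma Gadj_coset (s : 'S_n) (a b : 'I_n) : a != b -> Gadj (s * ex a)%g (s * ex b)%g.
Proof.
move=> ab; apply/forallP => k; apply/implyP => k0; apply/negP => /eqP E.
case/eqP: ab; apply: val_inj; apply: (@keyarith n k) => //; try exact: ltn_ord; move=> x xn.
have /setP/(_ ((s^-1)%g (Ordinal xn))) := E.
by rewrite /= !inE !permM /ex !rhoXE permKV.
Qed.

Lemma clique_rcosetH (s : 'S_n) : clique (@Gadj n) (rcosetH s).
Proof.
apply/forallP => x; apply/implyP => /mem_rcosetH [a ->].
apply/forallP => y; apply/implyP => /mem_rcosetH [b ->].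
apply/implyP => ne; apply: Gadj_coset; apply: contraNneq ne => ->. by [].
Qed.

Lemma rcosetsH_E : rcosetsH n = preim_partition (@rcosetH n) [set: 'S_n].
Proof.
have E x : rcosetH x = [set y in [set: 'S_n] | rcosetH x == rcosetH y].
  apply/setP => y; rewrite !inE /=; apply/idP/idP.
    by move=> H; rewrite (rcosetH_eq H).
  by move/eqP ->; apply: rcosetH_self.
apply/setP => C; apply/imsetP/imsetP => [] [x _ ->]; exists x => //.
Qed.

Lemma partition_rcosetsH : partition (rcosetsH n) [set: 'S_n].
Proof. rewrite rcosetsH_E; exact: preim_partitionP. Qed.

Lemma card_rcosetsH : #|rcosetsH n| = n.-1`!.
Proof.
have := card_partition partition_rcosetsH.
rewrite cardsT card_Sn.
rewrite (eq_bigr (fun _ => n)); last by move=> C /imsetP [x _ ->]; rewrite card_rcosetH.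
rewrite sum_nat_const -(prednK n0) factS mulnC prednK //.
  by move/eqP; rewrite eqn_pmul2r ?n0 // => /eqP.
exact: n0.
Qed.

Lemma preim1 (u : 'S_n) : preim_init u 1 = [set (u^-1)%g z0].
Proof.
apply/setP => i; rewrite !inE ltnS leqn0.
rewrite -[0]/(val z0) val_eqE.
by rewrite -(inj_eq (@perm_inj _ u)) permKV.
Qed.

Definition k1 : 'I_n := Ordinal hn.

Lemma notG (s t : 'S_n) : (s^-1)%g z0 = (t^-1)%g z0 -> ~~ Gadj s t.
Proof.
move=> E; apply/forallP => /(_ k1) /implyP /(_ isT).
by rewrite /= !preim1 E eqxx.
Qed.

Lemma colorable_n : colorable (@Gadj n) n.
Proof.
apply/existsP; exists [ffun s : 'S_n => (s^-1)%g z0].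
apply/forallP => x; apply/forallP => y; apply/implyP => G.
rewrite !ffunE; apply/negP => /eqP E.
by move: G; rewrite (negbTE (notG E)).
Qed.

Lemma colorable_ge k : colorable (@Gadj n) k -> n <= k.
Proof.
case/existsP => c /forallP P.
have inj : injective (fun a : 'I_n => c (ex a)).
  move=> a b E; apply/eqP; apply: contraT => ne.
  have := Gadj_coset 1%g ne; rewrite !mul1g => G.
  by move: (P (ex a)) => /forallP /(_ (ex b)) /implyP /(_ G); rewrite E eqxx.
by have := leq_card _ inj; rewrite !card_ord.
Qed.

Lemma n_le_card : n <= #|'S_n|.
Proof. by apply: leq_trans (max_card (mem (rcosetH (1%g : 'S_n)))); rewrite card_rcosetH. Qed.

Lemma chrom : chromatic_number (@Gadj n) = n.
Proof.
rewrite /chromatic_number; apply/eqP; rewrite eqn_leq; apply/andP; split.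
  have nN : n < #|'S_n|.+1 by rewrite ltnS n_le_card.
  apply: (@bigmin_le _ _ _ (fun k : 'I_ _ => (k : nat)) _ (Ordinal nN)).
    exact: mem_index_enum.
  exact: colorable_n.
apply: (big_ind (fun x => n <= x)).
- exact: n_le_card.
- by move=> x y hx hy; rewrite leq_min hx hy.
- by move=> k /colorable_ge.
Qed.

Lemma indep_inj (A : {set 'S_n}) : independent (@Gadj n) A ->
  {in A &, injective (@rcosetH n)}.
Proof.
move=> /forallP P x y xA yA E; apply/eqP; apply: contraT => ne.
have := clique_rcosetH x => /forallP /(_ x) /implyP /(_ (rcosetH_self x)).
move=> /forallP /(_ y) /implyP; rewrite E rcosetH_self => /(_ isT) /implyP /(_ ne) G.
by move: (P x); rewrite xA => /forallP /(_ y); rewrite yA G.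
Qed.

Lemma indep_le (A : {set 'S_n}) : independent (@Gadj n) A -> #|A| <= n.-1`!.
Proof.
move=> I; rewrite -(card_in_imset (indep_inj I)) -card_rcosetsH.
apply: subset_leq_card; apply/subsetP => C /imsetP [x _ ->].
exact: imset_f.
Qed.

Definition A0 : {set 'S_n} := [set s : 'S_n | s z0 == z0].

Lemma A0_indep : independent (@Gadj n) A0.
Proof.
have H u : u \in A0 -> (u^-1)%g z0 = z0.
  by rewrite inE => /eqP E; rewrite -{1}E permK.
apply/forallP => x; apply/implyP => xA; apply/forallP => y; apply/implyP => yA.
by apply: notG; rewrite !H.
Qed.

Lemma A0_card : #|A0| = n.-1`!.
Proof.
rewrite -(card_in_imset (indep_inj A0_indep)) -card_rcosetsH.
suff -> : [set rcosetH x | x in A0] = rcosetsH n by [].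
apply/setP => C; apply/imsetP/imsetP => [] [s _ ->].
  by exists s.
pose a : 'I_n := Ordinal (ltn_pmod (n - s z0) n0).
exists (s * ex a)%g.
  rewrite inE permM /ex; apply/eqP; apply: val_inj => /=.
  rewrite rhoXE modnDmr subnKC ?modnn //; exact: ltnW (ltn_ord _).
apply/esym/rcosetH_eq/mem_rcosetH; by exists a.
Qed.

Lemma indep : independence_number (@Gadj n) = n.-1`!.
Proof.
apply/eqP; rewrite eqn_leq; apply/andP; split.
  by apply/bigmax_leqP => A; apply: indep_le.
by rewrite -{1}A0_card; apply: leq_bigmax_cond A0_indep.
Qed.
End S.

Unset Implicit Arguments.
Set Strict Implicit.

Theorem mainTheorem17 (n : nat) (hn : 2 <= n) :
  [/\ chromatic_number (@Gadj n) = n,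
      independence_number (@Gadj n) = n.-1`!,
      (forall s : 'S_n, clique (@Gadj n) (rcosetH s) /\ #|rcosetH s| = n),
      partition (@rcosetsH n) [set: 'S_n]
    & #|@rcosetsH n| = n.-1`!].
Proof.
split.
- exact: chrom.
- exact: indep.
- by move=> s; split; [apply: clique_rcosetH | apply: card_rcosetH].
- exact: partition_rcosetsH.
- exact: card_rcosetsH.
Qed.
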